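(* Let $(Q,\Sigma,\Psi)$ be a HMM. For any $\pi_1,\pi_2\in\mathbb{R}^{|Q|}$ we have $\pi_1\equiv\pi_2$ if and only if $\pi_1-\pi_2$ is orthogonal to $\mathrm{Span}\{\Psi(w)\mathbbm{1}^T\mid w\in\Sigma^*\}$.
   Context: Let $(\Sigma,\mathscr{G},\lambda)$ be a measure space where $\Sigma$ is a topological space and every open subset of $\Sigma$ belongs to $\mathscr{G}$ and has positive measure. A HMM is a triple $(Q,\Sigma,\Psi)$ with $Q$ a finite set and $\Psi:\Sigma\to[0,\infty)^{|Q|\times|Q|}$ a piecewise continuous measurable function such that the entrywise integral $\int_\Sigma\Psi\,d\lambda$ is stochastic. $\Psi$ is piecewise continuous if there is an open $C\subseteq\Sigma$ on which $\Psi$ is continuous such that each $x\in\Sigma\setminus C$ is the limit of some sequence $x_n\in C$ with $\Psi(x_n)\to\Psi(x)$. $\Psi$ is extended to finite words by $\Psi(x_1\cdots x_n)=\Psi(x_1)\cdots\Psi(x_n)$ (the empty word giving the identity), $\Sigma^*$ is the set of finite words, $\mathbbm{1}=(1,\dots,1)$, and $\lambda^n$ is the product measure on $\Sigma^n$ with product $\sigma$-algebra $\mathscr{G}^n$. For a row vector $\pi$, $\mathbb{P}_\pi$ is the (for initial distributions: unique probability) measure on $\Sigma^\omega$ determined by $\mathbb{P}_\pi(A\Sigma^\omega)=\pi\left(\int_A\Psi\,d\lambda^n\right)\mathbbm{1}^T$ for cylinder sets $A=A_1\times\dots\times A_n$, $A_i\in\mathscr{G}$, where $A\Sigma^\omega$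 is the set of infinite words whose first $n$ letters lie in $A$. $\pi_1\equiv\pi_2$ means $\mathbb{P}_{\pi_1}(A)=\mathbb{P}_{\pi_2}(A)$ for all measurable $A\subseteq\Sigma^\omega$ (equivalently, $\pi_1\int_E\Psi\,d\lambda^n\mathbbm{1}^T=\pi_2\int_E\Psi\,d\lambda^n\mathbbm{1}^T$ for all $n$ and all $E\in\mathscr{G}^n$). *)

(* Defs.v *)
From HB Require Import structures.
From mathcomp Require Import all_boot all_order all_algebra.
From mathcomp Require Import all_classical all_reals all_analysis.

Set Implicit Arguments.
Unset Strict Implicit.
Unset Printing Implicit Defensive.

Import Order.TTheory GRing.Theory Num.Theory.
Import numFieldTopology.Exports numFieldNormedType.Exports.
Local Open Scope classical_set_scope.
Local Open Scope ring_scope.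

#[short(type="topMeasurableType")]
HB.structure Definition TopMeasurable (d : measure_display) :=
  {T of Topological T & Measurable d T}.

Section HMM.
Context {d : measure_display} {T : topMeasurableType d} {R : realType}.

Definition open_pos (lam : {measure set T -> \bar R}) : Prop :=
  forall U : set T, open U -> measurable U /\ (U !=set0 -> (0 < lam U)%E).

Definition psiw {k : nat} (Psi : T -> 'M[R]_k) (w : seq T) : 'M[R]_k :=
  foldr (fun x M => Psi x *m M) 1%:M w.

Definition piecewise_continuous {k : nat} (Psi : T -> 'M[R]_k) : Prop :=
  exists C : set T, open C /\ {within C, continuous Psi} /\
    forall x, ~ C x -> exists u : nat -> T,
      (forall n, C (u n)) /\ (u n @[n --> \oo] --> x) /\
      (Psi (u n) @[n --> \oo] --> Psi x).

(* Integral with respect to the n-fold product measure lambda^n on Sigma^n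
   (n.-tuple T, equipped with the product sigma-algebra G^n), computed as the
   iterated integral  \int lam(dx1) \int lam(dx2) ... f(x1,...,xn). *)
Fixpoint prod_int (lam : {measure set T -> \bar R}) (n : nat)
  : (n.-tuple T -> \bar R) -> \bar R :=
  match n with
  | 0 => fun f => f [tuple]
  | n'.+1 => fun f =>
      (\int[lam]_x prod_int lam (fun t : n'.-tuple T => f (cons_tuple x t)))%E
  end.

(* The entrywise integral  \int_E Psi d lambda^n  (a real matrix; the entries
   are nonnegative extended reals, finite for an HMM). *)
Definition int_psi {k : nat} (lam : {measure set T -> \bar R})
  (Psi : T -> 'M[R]_k) (n : nat) (E : set (n.-tuple T)) : 'M[R]_k :=
  \matrix_(i, j) fine (prod_int lam
      (fun t : n.-tuple T => ((\1_E t : R) * psiw Psi t i j)%:E)).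

Definition is_HMM {k : nat} (lam : {measure set T -> \bar R})
  (Psi : T -> 'M[R]_k) : Prop :=
  [/\ forall x i j, 0 <= Psi x i j,
      forall i j, measurable_fun setT (fun x => Psi x i j),
      piecewise_continuous Psi,
      forall i j, (\int[lam]_x (Psi x i j)%:E)%E \is a fin_num &
      forall i : 'I_k, \sum_(j < k) fine (\int[lam]_x (Psi x i j)%:E)%E = 1].

(* pi1 == pi2 : equality of P_pi1 and P_pi2, in the equivalent form
   pi1 (\int_E Psi d lambda^n) 1^T = pi2 (\int_E Psi d lambda^n) 1^T
   for all n and all E in G^n. *)
Definition hmm_equiv {k : nat} (lam : {measure set T -> \bar R})
  (Psi : T -> 'M[R]_k) (pi1 pi2 : 'rV[R]_k) : Prop :=
  forall (n : nat) (E : set (n.-tuple T)), measurable E ->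
    pi1 *m int_psi lam Psi E *m (const_mx 1 : 'cV[R]_k)
    = pi2 *m int_psi lam Psi E *m (const_mx 1 : 'cV[R]_k).

(* v is orthogonal to Span {Psi(w) 1^T | w in Sigma^*}: v annihilates every
   element of the span of every finite subfamily of the generators. *)
Definition orth_span_words {k : nat} (Psi : T -> 'M[R]_k) (v : 'rV[R]_k)
  : Prop :=
  forall (ws : seq (seq T)) (u : 'cV[R]_k),
    u \in <<[seq psiw Psi w *m (const_mx 1 : 'cV[R]_k) | w <- ws]>>%VS ->
    v *m u = 0.

End HMM.

(* Main.v *)
Require Import Defs.
From HB Require Import structures.
From mathcomp Require Import all_boot all_order all_algebra.
From mathcomp Require Import all_classical all_reals all_analysis.
From mathcomp Require Import measurable_realfun.
From mathcomp Require Import ring lra.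

Import Order.TTheory GRing.Theory Num.Theory.
Import numFieldTopology.Exports numFieldNormedType.Exports.
Local Open Scope classical_set_scope.
Local Open Scope ring_scope.
Set Implicit Arguments.
Unset Strict Implicit.
Unset Printing Implicit Defensive.

Section pack.
Context {d0 : measure_display} {T0 : measurableType d0} {R0 : realType} (n : nat).
Variable mu : set (n.-tuple T0) -> \bar R0.
Hypotheses (mu0 : mu set0 = 0) (mu_ge0 : forall A, (0 <= mu A)%E)
  (mu_ssa : semi_sigma_additive mu) (mu_fin : mu setT \is a fin_num).

Let mu' := mu.
HB.instance Definition _ := isMeasure.Build _ _ _ mu' mu0 mu_ge0 mu_ssa.

Lemma pack_le A : measurable A -> (mu A <= mu setT)%E.
Proof. by move=> mA; apply: (@le_measure _ _ _ mu') => //; rewrite inE. Qed.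

Lemma pack_xsection (A : set (T0 * n.-tuple T0)) : measurable A ->
  measurable_fun setT (mu \o xsection A).
Proof.
move=> mA.
have h : exists M : R0, forall X, measurable X ->
    (mrestr mu' (measurableT : measurable (setT : set (n.-tuple T0))) X < M%:E)%E.
  exists (fine (mu setT) + 1) => X mX; rewrite /mrestr setIT.
  rewrite EFinD fineK // (le_lt_trans (pack_le mX)) //.
  by rewrite lteDl // lte01.
have := measurable_prod_subset_xsection h mA.
move=> [_ H]; move: H; apply: eq_measurable_fun => x _ /=.
by rewrite /mrestr setIT.
Qed.
End pack.


Lemma cont_sum {R : realType} {U : topologicalType} (I : Type) (s : seq I)
  (f : I -> U -> R) (x : U) :
  (forall i, {for x, continuous (f i)}) ->
  {for x, continuous (fun y => \sum_(i <- s) f i y)}.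
Proof.
elim: s => [|i s IH] hf.
  have -> : (fun y => \sum_(i <- [::]) f i y) = fun _ => 0.
    by apply: funext => y; rewrite big_nil.
  exact: cst_continuous.
have -> : (fun y => \sum_(j <- i :: s) f j y) =
    (f i) + (fun y => \sum_(j <- s) f j y).
  by apply: funext => y; rewrite big_cons.
exact: (cvgD (hf i) (IH hf)).
Qed.

Lemma Lcont {R : realType} k (r : 'rV[R]_k) (y : 'cV[R]_k) :
  continuous (fun M : 'M[R]_k => (r *m M *m y) 0 0).
Proof.
move=> M.
have -> : (fun M : 'M[R]_k => (r *m M *m y) 0 0) =
    (fun M => \sum_i \sum_j (r 0 i * y j 0) * M i j).
  apply: funext => N; rewrite mxE; under eq_bigr do rewrite mxE big_distrl /=.
  rewrite exchange_big /=; apply: eq_bigr => i _; apply: eq_bigr => j _.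
  by rewrite mulrAC.
apply: cont_sum => i; apply: cont_sum => j.
exact: (continuous_comp (@coord_continuous R k k i j M) (@mulrl_continuous R (r 0 i * y j 0) (M i j))).
Qed.

Section Main.
Context {d : measure_display} {T : topMeasurableType d} {R : realType}.
Variable lam : {measure set T -> \bar R}.
Variable k : nat.
Variable Psi : T -> 'M[R]_k.
Hypothesis Psi0 : forall x i j, 0 <= Psi x i j.
Hypothesis mPsi : forall i j, measurable_fun setT (fun x => Psi x i j).
Hypothesis finPsi : forall i j, (\int[lam]_x (Psi x i j)%:E)%E \is a fin_num.

Lemma ind_ge0 (U : Type) (A : set U) x : 0 <= (\1_A x : R).
Proof. by rewrite indicE. Qed.

Definition nnm m n (M : 'M[R]_(m,n)) := forall i j, 0 <= M i j.

Lemma nnm_mul m n p (A : 'M[R]_(m,n)) (B : 'M[R]_(n,p)) :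
  nnm A -> nnm B -> nnm (A *m B).
Proof. by move=> hA hB i j; rewrite mxE; apply: sumr_ge0 => l _; apply: mulr_ge0. Qed.

Lemma nnm_psiw w : nnm (psiw Psi w).
Proof.
elim: w => [|x w IH] /= i j; first by rewrite mxE; exact: ler0n.
by apply: nnm_mul => // ? ?; exact: Psi0.
Qed.

Definition sec n (A : set (n.+1.-tuple T)) (x : T) : set (n.-tuple T) :=
  [set t | A (cons_tuple x t)].
Arguments sec : clear implicits.

Definition G n (A : set (n.-tuple T)) (a : 'rV[R]_k) (b : 'cV[R]_k) : \bar R :=
  prod_int lam (fun t : n.-tuple T =>
    ((\1_A t : R) * (a *m psiw Psi t *m b) 0 0)%:E).
Arguments G : clear implicits.

Lemma GS n A a b :
  G n.+1 A a b = (\int[lam]_x G n (sec n A x) (a *m Psi x) b)%E.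
Proof.
rewrite /G /=; apply: eq_integral => x _; congr prod_int; apply: funext => t.
by rewrite /= mulmxA.
Qed.

Lemma G0E A a b : G 0 A a b = ((\1_A [tuple] : R) * (a *m b) 0 0)%:E.
Proof. by rewrite /G /= mulmx1. Qed.

Lemma G_ge0 n A a b : nnm a -> nnm b -> (0 <= G n A a b)%E.
Proof.
elim: n A a => [|n IH] A a ha hb.
  rewrite G0E lee_fin; apply: mulr_ge0; first exact: ind_ge0.
  exact: nnm_mul.
rewrite GS; apply: integral_ge0 => x _; apply: IH => //.
by apply: nnm_mul => // ? ?; exact: Psi0.
Qed.

Lemma G_set0 n a b : G n set0 a b = 0.
Proof.
elim: n a => [|n IH] a; first by rewrite G0E indic0 mul0r.
rewrite GS; under eq_integral do rewrite IH.
exact: integral0.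
Qed.

Definition er (i : 'I_k) : 'rV[R]_k := delta_mx 0 i.
Definition ec (j : 'I_k) : 'cV[R]_k := delta_mx j 0.

Lemma sum_er (i : 'I_k) (f : 'I_k -> R) : \sum_l er i 0 l * f l = f i.
Proof.
rewrite (bigD1 i) //= /er mxE !eqxx mul1r big1 ?addr0 // => l /negbTE ne.
by rewrite mxE ne andbF mul0r.
Qed.

Lemma sum_ec (j : 'I_k) (f : 'I_k -> R) : \sum_l ec j l 0 * f l = f j.
Proof.
rewrite (bigD1 j) //= /ec mxE !eqxx mul1r big1 ?addr0 // => l /negbTE ne.
by rewrite mxE ne mul0r.
Qed.

Lemma bilin (a : 'rV[R]_k) (M : 'M[R]_k) (b : 'cV[R]_k) :
  (a *m M *m b) 0 0 = \sum_i \sum_j a 0 i * b j 0 * M i j.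
Proof.
rewrite mxE; under eq_bigr do rewrite mxE big_distrl /=.
rewrite exchange_big /=; apply: eq_bigr => i _; apply: eq_bigr => j _.
by rewrite mulrAC.
Qed.


Lemma erc_e (i j : 'I_k) (M : 'M[R]_k) : (er i *m M *m ec j) 0 0 = M i j.
Proof. by rewrite /er /ec -rowE -colE !mxE. Qed.

Lemma erc1 (i j : 'I_k) : (er i *m ec j) 0 0 = (1%:M : 'M[R]_k) i j.
Proof. by rewrite -(mulmx1 (er i)) erc_e. Qed.

Lemma rowmul (a : 'rV[R]_k) (M : 'M[R]_k) l : (a *m M) 0 l = \sum_i a 0 i * M i l.
Proof. by rewrite mxE. Qed.

Lemma alg (a : 'rV[R]_k) (b : 'cV[R]_k) (M : 'M[R]_k) (r : 'I_k -> 'I_k -> R) :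
  \sum_l \sum_j (a *m M) 0 l * b j 0 * r l j =
  \sum_i \sum_j a 0 i * b j 0 * (\sum_l M i l * r l j).
Proof.
transitivity (\sum_l \sum_j \sum_i a 0 i * b j 0 * (M i l * r l j)).
  apply: eq_bigr => l _; apply: eq_bigr => j _.
  rewrite rowmul !big_distrl /=; apply: eq_bigr => i _; ring.
rewrite exchange_big /=.
transitivity (\sum_j \sum_i \sum_l a 0 i * b j 0 * (M i l * r l j)).
  by apply: eq_bigr => j _; rewrite exchange_big.
rewrite exchange_big /=; apply: eq_bigr => i _; apply: eq_bigr => j _.
by rewrite big_distrr.
Qed.

Lemma regroup (a : 'rV[R]_k) (b : 'cV[R]_k) (h : 'I_k -> 'I_k -> R) :
  \sum_i \sum_j a 0 i * b j 0 * h i j = \sum_i a 0 i * \sum_j b j 0 * h i j.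
Proof.
by apply: eq_bigr => i _; rewrite big_distrr; apply: eq_bigr => j _; rewrite -mulrA.
Qed.

Lemma nnm_er i : nnm (er i).
Proof. by move=> ? ?; rewrite /er mxE; exact: ler0n. Qed.

Lemma nnm_ec i : nnm (ec i).
Proof. by move=> ? ?; rewrite /ec mxE; exact: ler0n. Qed.

Lemma int_lin (I : finType) (c : I -> R) (g : I -> T -> R) :
  (forall i, 0 <= c i) -> (forall i x, 0 <= g i x) ->
  (forall i, measurable_fun setT (g i)) ->
  (\int[lam]_x (\sum_i c i * g i x)%:E = \sum_i (c i)%:E * \int[lam]_x (g i x)%:E)%E.
Proof.
move=> c0 g0 mg.
under eq_integral do rewrite -sumEFin.
rewrite ge0_integral_sum //; last 2 first.
- by move=> i; apply/measurable_EFinP; exact: (measurable_funM (measurable_cst (c i)) (mg i)).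
- by move=> i x _; rewrite lee_fin; apply: mulr_ge0.
apply: eq_bigr => i _; under eq_integral do rewrite EFinM.
have mgi : measurable_fun setT (EFin \o g i) by apply/measurable_EFinP.
rewrite (ge0_integralZl_EFin _ _ _ mgi) //.
by move=> x _; rewrite lee_fin.
Qed.

Lemma sec_measurable n (A : set (n.+1.-tuple T)) : measurable A ->
  measurable [set p : T * n.-tuple T | A (cons_tuple p.1 p.2)].
Proof.
move=> mA.
have := measurable_cons (f := fst) (g := snd) measurable_fst measurable_snd measurableT mA.
by rewrite setTI.
Qed.

Lemma xsec_sec n (A : set (n.+1.-tuple T)) x :
  xsection [set p : T * n.-tuple T | A (cons_tuple p.1 p.2)] x = sec n A x.
Proof. by apply/seteqP; split => t; rewrite /xsection /= inE. Qed.

Lemma meas_sec n (A : set (n.+1.-tuple T)) x : measurable A -> measurable (sec n A x).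
Proof. by move=> mA; rewrite -xsec_sec; exact: measurable_xsection (sec_measurable mA). Qed.


Definition Gfin n := forall (A : set (n.-tuple T)), measurable A ->
  forall i j, G n A (er i) (ec j) \is a fin_num.
Definition Glin n := forall (A : set (n.-tuple T)), measurable A ->
  forall a b, nnm a -> nnm b ->
  G n A a b = (\sum_i \sum_j a 0 i * b j 0 * fine (G n A (er i) (ec j)))%:E.
Definition Gssa n := forall i j,
  semi_sigma_additive (fun A : set (n.-tuple T) => G n A (er i) (ec j)).

Lemma G_sec_meas n : Gfin n -> Gssa n -> forall (A : set (n.+1.-tuple T)),
  measurable A -> forall l j,
  measurable_fun setT (fun x => G n (sec n A x) (er l) (ec j)).
Proof.
move=> hf hs A mA l j.
have := pack_xsection (mu := fun B => G n B (er l) (ec j)) (@G_set0 n (er l) (ec j))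
  (fun B => @G_ge0 n B (er l) (ec j) (nnm_er l) (nnm_ec j)) (hs l j) (hf _ measurableT l j)
  (sec_measurable mA).
apply: eq_measurable_fun => x _ /=; rewrite xsec_sec //.
Qed.

Lemma G_sec_le n : Gfin n -> Gssa n -> forall (B : set (n.-tuple T)),
  measurable B -> forall l j, (G n B (er l) (ec j) <= G n setT (er l) (ec j))%E.
Proof.
move=> hf hs B mB l j.
exact: (pack_le (mu := fun B => G n B (er l) (ec j)) (@G_set0 n (er l) (ec j))
  (fun B => @G_ge0 n B (er l) (ec j) (nnm_er l) (nnm_ec j)) (hs l j) mB).
Qed.

Lemma base_fin : Gfin 0.
Proof. by move=> A _ i j; rewrite G0E. Qed.

Lemma base_lin : Glin 0.
Proof.
move=> A _ a b _ _; rewrite G0E; congr EFin.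
under eq_bigr do under eq_bigr do rewrite G0E /= erc1.
rewrite -{1}(mulmx1 a) bilin big_distrr /=; apply: eq_bigr => i _.
rewrite big_distrr /=; apply: eq_bigr => j _.
by rewrite mulrCA.
Qed.

Lemma base_ssa : Gssa 0.
Proof.
move=> i j.
have c0 : 0 <= (er i *m ec j) 0 0 by apply: nnm_mul; [exact: nnm_er|exact: nnm_ec].
have -> : (fun A : set (0.-tuple T) => G 0 A (er i) (ec j)) =
    mscale (NngNum c0) (\d_([tuple] : 0.-tuple T) : {measure set _ -> \bar R}).
  apply: funext => A; rewrite G0E /mscale /= /dirac EFinM muleC //.
exact: measure_semi_sigma_additive.
Qed.


Section Step.
Variable n : nat.
Hypotheses (hf : Gfin n) (hl : Glin n) (hs : Gssa n).

Definition rr (A : set (n.+1.-tuple T)) l j x := fine (G n (sec n A x) (er l) (ec j)).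
Definition HH A i j x := \sum_l Psi x i l * rr A l j x.

Lemma rr_ge0 A l j x : 0 <= rr A l j x.
Proof. by apply: fine_ge0; apply: G_ge0; [exact: nnm_er|exact: nnm_ec]. Qed.

Lemma rr_meas A : measurable A -> forall l j, measurable_fun setT (rr A l j).
Proof.
move=> mA l j.
exact: (measurableT_comp (fine_measurable measurableT) (G_sec_meas hf hs mA l j)).
Qed.

Lemma rr_le A : measurable A -> forall l j x,
  rr A l j x <= fine (G n setT (er l) (ec j)).
Proof.
move=> mA l j x; rewrite /rr; apply: fine_le; [exact: (hf (@meas_sec n A x mA) l j)|exact: (hf measurableT l j)|].
exact: G_sec_le (@meas_sec n A x mA) l j.
Qed.

Lemma HH_ge0 A i j x : 0 <= HH A i j x.
Proof. by apply: sumr_ge0 => l _; apply: mulr_ge0; [exact: Psi0|exact: rr_ge0]. Qed.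

Lemma HH_meas A : measurable A -> forall i j, measurable_fun setT (HH A i j).
Proof.
move=> mA i j; apply: measurable_sum => l.
exact: (measurable_funM (mPsi i l) (rr_meas mA l j)).
Qed.

Lemma step_formula A : measurable A -> forall a b, nnm a -> nnm b ->
  G n.+1 A a b =
  (\int[lam]_x (\sum_i \sum_j a 0 i * b j 0 * HH A i j x)%:E)%E.
Proof.
move=> mA a b ha hb; rewrite GS; apply: eq_integral => x _.
rewrite hl //; last by apply: nnm_mul => // ? ?; exact: Psi0.
- congr EFin; exact: (alg a b (Psi x) (fun l j => rr A l j x)).
- exact: meas_sec.
Qed.

Lemma HH_fin A : measurable A -> forall i j,
  (\int[lam]_x (HH A i j x)%:E)%E \is a fin_num.
Proof.
move=> mA i j.
have h0 : (0 <= \int[lam]_x (HH A i j x)%:E)%E.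
  by apply: integral_ge0 => x _; rewrite lee_fin; exact: HH_ge0.
have h1 : (\int[lam]_x (HH A i j x)%:E <=
    \int[lam]_x (\sum_l fine (G n setT (er l) (ec j)) * Psi x i l)%:E)%E.
  apply: ge0_le_integral => //.
  - by move=> x _; rewrite lee_fin; exact: HH_ge0.
  - by apply/measurable_EFinP; exact: HH_meas.
  - apply/measurable_EFinP; apply: measurable_sum => l.
    exact: (measurable_funM (measurable_cst _) (mPsi i l)).
  - move=> x _; rewrite lee_fin; apply: ler_sum => l _.
    by rewrite [leRHS]mulrC; apply: ler_wpM2l; [exact: Psi0|exact: rr_le].
rewrite int_lin in h1; last 3 first.
- by move=> l; apply: fine_ge0; apply: G_ge0; [exact: nnm_er|exact: nnm_ec].
- by move=> l x; exact: Psi0.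
- by move=> l; exact: mPsi.
rewrite ge0_fin_numE //; apply: (le_lt_trans h1).
rewrite -ge0_fin_numE; last first.
  apply: sume_ge0 => l _; apply: mule_ge0.
    by rewrite lee_fin; apply: fine_ge0; apply: G_ge0; [exact: nnm_er|exact: nnm_ec].
  by apply: integral_ge0 => x _; rewrite lee_fin; exact: Psi0.
by apply/sum_fin_numP => l _ _; rewrite fin_numM.
Qed.

Lemma G_e1 A : measurable A -> forall i j,
  G n.+1 A (er i) (ec j) = (\int[lam]_x (HH A i j x)%:E)%E.
Proof.
move=> mA i j; rewrite step_formula //; [|exact: nnm_er|exact: nnm_ec].
apply: eq_integral => x _; congr EFin.
by rewrite regroup sum_er sum_ec.
Qed.

Lemma step_fin : Gfin n.+1.
Proof. by move=> A mA i j; rewrite G_e1 //; exact: HH_fin. Qed.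

Lemma step_lin : Glin n.+1.
Proof.
move=> A mA a b ha hb; rewrite step_formula //.
under eq_integral do rewrite regroup.
rewrite int_lin; last 3 first.
- by move=> i; exact: ha.
- move=> i x; apply: sumr_ge0 => j _; apply: mulr_ge0; [exact: hb|exact: HH_ge0].
- move=> i; apply: measurable_sum => j.
  exact: (measurable_funM (measurable_cst _) (HH_meas mA i j)).
rewrite -sumEFin; apply: eq_bigr => i _.
rewrite int_lin; last 3 first.
- by move=> j; exact: hb.
- by move=> j x; exact: HH_ge0.
- by move=> j; exact: HH_meas.
rewrite -sumEFin ge0_sume_distrr; last first.
  by move=> j _; apply: mule_ge0; [rewrite lee_fin; exact: hb|apply: integral_ge0 => x _; rewrite lee_fin; exact: HH_ge0].
apply: eq_bigr => j _.
rewrite G_e1 // -(fineK (HH_fin mA i j)) /= -!EFinM.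
by rewrite mulrA.
Qed.

Lemma GSe B : measurable B -> forall i j,
  G n.+1 B (er i) (ec j) =
  (\int[lam]_x \sum_l (Psi x i l)%:E * G n (sec n B x) (er l) (ec j))%E.
Proof.
move=> mB i j; rewrite G_e1 //; apply: eq_integral => x _.
rewrite /HH -sumEFin; apply: eq_bigr => l _.
by rewrite EFinM /rr fineK //; exact: (hf (@meas_sec n B x mB) l j).
Qed.

Lemma step_ssa : Gssa n.+1.
Proof.
move=> i j F mF tF mU.
have key : G n.+1 (\bigcup_m F m) (er i) (ec j) =
    (\sum_(0 <= m <oo) G n.+1 (F m) (er i) (ec j))%E.
  rewrite GSe //.
  transitivity (\int[lam]_x \sum_(0 <= m <oo)
      \sum_l (Psi x i l)%:E * G n (sec n (F m) x) (er l) (ec j))%E.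
    apply: eq_integral => x _.
    rewrite nneseries_sum; last first.
      move=> l m _; apply: mule_ge0; first by rewrite lee_fin; exact: Psi0.
      by apply: G_ge0; [exact: nnm_er|exact: nnm_ec].
    apply: eq_bigr => l _.
    rewrite nneseriesZl; last first.
      by move=> m _; apply: G_ge0; [exact: nnm_er|exact: nnm_ec].
    congr (_ * _)%E.
    have -> : sec n (\bigcup_m F m) x = \bigcup_m sec n (F m) x.
      by apply/seteqP; split => t [m _ Ht]; exists m.
    apply/esym/(cvg_lim (@ereal_hausdorff R)).
    apply: hs.
    - by move=> m; exact: meas_sec.
    - move=> m1 m2 _ _ [t [h1 h2]]; apply: tF => //.
      by exists (cons_tuple x t).
    - have -> : \bigcup_m sec n (F m) x = sec n (\bigcup_m F m) x.
        by apply/seteqP; split => t [m _ Ht]; exists m.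
      exact: meas_sec.
  rewrite integral_nneseries //.
  - by apply: eq_eseriesr => m _; rewrite GSe.
  - move=> m; apply: emeasurable_sum => l.
    apply: emeasurable_funM; first by apply/measurable_EFinP; exact: mPsi.
    exact: G_sec_meas.
  - move=> m x _; apply: sume_ge0 => l _; apply: mule_ge0.
      by rewrite lee_fin; exact: Psi0.
    by apply: G_ge0; [exact: nnm_er|exact: nnm_ec].
rewrite key; apply: is_cvg_nneseries => m _ _.
by apply: G_ge0; [exact: nnm_er|exact: nnm_ec].
Qed.

End Step.

Lemma allG n : [/\ Gfin n, Glin n & Gssa n].
Proof.
elim: n => [|n [hf hl hs]]; first by split; [exact: base_fin|exact: base_lin|exact: base_ssa].
by split; [exact: step_fin|exact: step_lin|exact: step_ssa].
Qed.


Lemma int_psiE n (E : set (n.-tuple T)) i j :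
  int_psi lam Psi E i j = fine (G n E (er i) (ec j)).
Proof.
rewrite /int_psi mxE /G; congr fine; congr prod_int; apply: funext => t.
by rewrite erc_e.
Qed.

Definition box n (U : set T) (B : set (n.-tuple T)) : set (n.+1.-tuple T) :=
  [set t | U (tnth t ord0) /\ B [tuple of behead t]].
Arguments box : clear implicits.

Lemma box_meas n U B : measurable U -> measurable B -> measurable (box n U B).
Proof.
move=> mU mB.
have h1 := measurable_tnth (ord0 : 'I_n.+1) measurableT mU.
have h2 := measurable_behead measurableT mB.
by have := measurableI _ _ h1 h2; rewrite !setTI.
Qed.

Lemma sec_box n U B x :
  sec n (box n U B) x = if x \in U then B else set0.
Proof.
have Eb : forall t : n.-tuple T, [tuple of behead (cons_tuple x t)] = t.
  by move=> t; apply: val_inj.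
rewrite /sec /box; case: ifPn => [/set_mem xU|/negP xU];
  apply/seteqP; split => t /=; rewrite ?Eb //.
- by case.
- by case=> Ux; exfalso; apply: xU; rewrite inE.
Qed.

Lemma indPsi_ge0 U i l z : 0 <= \1_U z * Psi z i l.
Proof. by apply: mulr_ge0; [exact: ind_ge0|exact: Psi0]. Qed.

Lemma indPsi_meas U : measurable U -> forall i l,
  measurable_fun setT (fun z => \1_U z * Psi z i l).
Proof. by move=> mU i l; exact: (measurable_funM (measurable_indic mU) (mPsi i l)). Qed.

Lemma fin_indPsi U : measurable U -> forall i l,
  (\int[lam]_z (\1_U z * Psi z i l)%:E)%E \is a fin_num.
Proof.
move=> mU i l; rewrite ge0_fin_numE; last first.
  by apply: integral_ge0 => z _; rewrite lee_fin; exact: indPsi_ge0.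
apply: (le_lt_trans (y := (\int[lam]_z (Psi z i l)%:E)%E)).
  apply: ge0_le_integral => //.
  - by move=> z _; rewrite lee_fin; exact: indPsi_ge0.
  - by apply/measurable_EFinP; exact: indPsi_meas.
  - by apply/measurable_EFinP; exact: mPsi.
  - move=> z _; rewrite lee_fin indicE.
    by case: (z \in U); rewrite ?mul1r ?mul0r //; exact: Psi0.
by rewrite -ge0_fin_numE //; apply: integral_ge0 => z _; rewrite lee_fin; exact: Psi0.
Qed.

Lemma G_box n U B : measurable U -> measurable B -> forall i j,
  G n.+1 (box n U B) (er i) (ec j) =
  (\sum_l (fine (G n B (er l) (ec j)))%:E *
     \int[lam]_z (\1_U z * Psi z i l)%:E)%E.
Proof.
move=> mU mB i j; have [hf hl hs] := allG n.
rewrite G_e1 //; last exact: box_meas.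
rewrite -int_lin; last 3 first.
- by move=> l; apply: fine_ge0; apply: G_ge0; [exact: nnm_er|exact: nnm_ec].
- by move=> l z; exact: indPsi_ge0.
- by move=> l; exact: indPsi_meas.
apply: eq_integral => z _; congr EFin; rewrite /HH; apply: eq_bigr => l _.
rewrite /rr sec_box indicE; case: (z \in U); first by rewrite mul1r mulrC.
by rewrite G_set0 /= mul0r !mulr0.
Qed.

Definition MU (U : set T) : 'M[R]_k :=
  \matrix_(i, l) fine (\int[lam]_z (\1_U z * Psi z i l)%:E)%E.

Lemma int_psi_box n U B : measurable U -> measurable B ->
  int_psi lam Psi (box n U B) = MU U *m int_psi lam Psi B.
Proof.
move=> mU mB; apply/matrixP => i j; rewrite int_psiE G_box // [RHS]mxE.
under eq_bigr do rewrite -(fineK (fin_indPsi mU i _)) -EFinM.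
rewrite sumEFin /=; apply: eq_bigr => l _.
by rewrite int_psiE /MU mxE mulrC.
Qed.


Lemma int_indPsi U : measurable U -> forall i l,
  lam.-integrable setT (fun z => (\1_U z * Psi z i l)%:E).
Proof.
move=> mU i l; apply/integrableP; split.
  by apply/measurable_EFinP; exact: indPsi_meas.
under eq_integral do rewrite abse_EFin ger0_norm ?indPsi_ge0 //.
by rewrite -ge0_fin_numE ?fin_indPsi //; apply: integral_ge0 => z _; rewrite lee_fin; exact: indPsi_ge0.
Qed.

Lemma claimB U (r : 'rV[R]_k) (y : 'cV[R]_k) : measurable U ->
  (((r *m MU U *m y) 0 0)%:E =
   \int[lam]_z (\1_U z * (r *m Psi z *m y) 0 0)%:E)%E.
Proof.
move=> mU.
under eq_integral do rewrite bilin big_distrr -sumEFin.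
rewrite integral_sum //; last first.
  move=> i; under eq_fun do rewrite big_distrr -sumEFin.
  apply: integrable_sum => // l _.
  apply: (eq_integrable _ _ _ _ (integrableZl _ (r 0 i * y l 0) (int_indPsi mU i l))) => //.
  by move=> z _ /=; rewrite -EFinM mulrCA.
rewrite bilin -sumEFin; apply: eq_bigr => i _.
under eq_integral do rewrite big_distrr -sumEFin.
rewrite integral_sum //; last first.
  move=> l.
  apply: (eq_integrable _ _ _ _ (integrableZl _ (r 0 i * y l 0) (int_indPsi mU i l))) => //.
  by move=> z _ /=; rewrite -EFinM mulrCA.
rewrite -sumEFin; apply: eq_bigr => l _.
rewrite (eq_integral (fun x => (r 0 i * y l 0)%:E * (\1_U x * Psi x i l)%:E)%E); last first.
  by move=> x _; rewrite -EFinM /= mulrCA.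
rewrite integralZl //; last exact: int_indPsi.
by rewrite /MU mxE -(fineK (fin_indPsi mU i l)) -EFinM.
Qed.


Lemma not_pos (s : T -> R) z : open_pos lam -> measurable_fun setT s ->
  {for z, continuous s} ->
  (forall U, open U -> (\int[lam]_w (\1_U w * s w)%:E)%E = 0) -> s z <= 0.
Proof.
move=> hop ms cs hU; rewrite leNgt; apply/negP => sz0.
have c0 : 0 < s z / 2 by rewrite divr_gt0.
have hlt : s z / 2 < s z by lra.
have h : nbhs z [set t | s z / 2 < s t] by exact: (cvgr_gt (s z) cs).
move: h; rewrite nbhsE => -[B] [oB Bz] BS.
have [mB Bpos] := hop B oB.
have lB : (0 < lam B)%E by apply: Bpos; exists z.
have hle : ((s z / 2)%:E * lam B <= \int[lam]_w (\1_B w * s w)%:E)%E.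
  have -> : ((s z / 2)%:E * lam B)%E = (\int[lam]_w (\1_B w * (s z / 2))%:E)%E.
    under eq_integral do rewrite EFinM muleC.
    rewrite ge0_integralZl_EFin.
    - by rewrite integral_indic // setIT.
    - exact: measurableT.
    - by move=> w _; rewrite lee_fin; exact: ind_ge0.
    - by apply/measurable_EFinP; exact: measurable_indic.
    - exact: ltW.
  apply: ge0_le_integral => //.
  - by move=> w _; rewrite lee_fin; apply: mulr_ge0; [exact: ind_ge0|exact: ltW].
  - apply/measurable_EFinP.
    exact: (measurable_funM (measurable_indic mB) (measurable_cst _)).
  - apply/measurable_EFinP; exact: (measurable_funM (measurable_indic mB) ms).
  - move=> w _; rewrite lee_fin indicE; case: (boolP (w \in B)) => [/set_mem Bw|_].
      by rewrite !mul1r; apply: ltW; exact: BS.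
    by rewrite !mul0r.
rewrite hU // in hle.
have : (0 < (s z / 2)%:E * lam B)%E by apply: mule_gt0 => //; rewrite lte_fin.
by rewrite ltNge hle.
Qed.

Definition Kr (r : 'rV[R]_k) := forall n (B : set (n.-tuple T)), measurable B ->
  r *m int_psi lam Psi B *m (const_mx 1 : 'cV[R]_k) = 0.

Lemma KrN r : Kr r -> Kr (- r).
Proof. by move=> h n B mB; rewrite !mulNmx (h n B mB) oppr0. Qed.

Lemma claimA r : Kr r -> forall n (B : set (n.-tuple T)), measurable B ->
  forall U, measurable U ->
  (r *m MU U *m (int_psi lam Psi B *m (const_mx 1 : 'cV[R]_k))) 0 0 = 0.
Proof.
move=> hr n B mB U mU; have := hr n.+1 (box n U B) (box_meas mU mB).
by rewrite int_psi_box // !mulmxA => ->; rewrite mxE.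
Qed.

Lemma s_meas (r : 'rV[R]_k) (y : 'cV[R]_k) :
  measurable_fun setT (fun z => (r *m Psi z *m y) 0 0).
Proof.
have h : measurable_fun setT (fun z => \sum_i \sum_j r 0 i * y j 0 * Psi z i j).
  apply: measurable_sum => i; apply: measurable_sum => j.
  exact: (measurable_funM (measurable_cst _) (mPsi i j)).
by move: h; apply: eq_measurable_fun => z _; rewrite bilin.
Qed.


Section Forward.
Variable C : set T.
Hypotheses (oC : open C) (cC : {within C, continuous Psi}).
Hypothesis hout : forall x, ~ C x -> exists u : nat -> T,
  (forall n, C (u n)) /\ (u n @[n --> \oo] --> x) /\
  (Psi (u n) @[n --> \oo] --> Psi x).
Hypothesis hop : open_pos lam.

Lemma step_le r : Kr r -> forall n (B : set (n.-tuple T)), measurable B ->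
  forall z, C z ->
  (r *m Psi z *m (int_psi lam Psi B *m (const_mx 1 : 'cV[R]_k))) 0 0 <= 0.
Proof.
move=> hr n B mB z Cz.
set y := int_psi lam Psi B *m (const_mx 1 : 'cV[R]_k).
apply: (@not_pos (fun w => (r *m Psi w *m y) 0 0) z hop (s_meas r y)).
- have cPsi : {for z, continuous Psi}.
    by move: cC; rewrite continuous_open_subspace // => /(_ z (mem_set Cz)).
  exact: (continuous_comp cPsi (@Lcont R k r y (Psi z))).
- move=> U oU; have [mU _] := hop oU.
  by rewrite -claimB // claimA.
Qed.

Lemma step_in r : Kr r -> forall n (B : set (n.-tuple T)), measurable B ->
  forall z, C z ->
  (r *m Psi z *m (int_psi lam Psi B *m (const_mx 1 : 'cV[R]_k))) 0 0 = 0.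
Proof.
move=> hr n B mB z Cz; apply/eqP; rewrite eq_le step_le //=.
have := step_le (KrN hr) mB Cz.
by rewrite !mulNmx mxE oppr_le0.
Qed.

Lemma step r : Kr r -> forall x, Kr (r *m Psi x).
Proof.
move=> hr x n B mB.
set y := int_psi lam Psi B *m (const_mx 1 : 'cV[R]_k).
suff h : (r *m Psi x *m y) 0 0 = 0.
  by apply/matrixP => i j; rewrite !ord1 -mulmxA -/y h mxE.
case: (pselect (C x)) => [Cx|nCx]; first exact: step_in.
have [u [Cu [_ Pu]]] := hout nCx.
have hc : (fun m => (r *m Psi (u m) *m y) 0 0) @ \oo --> (r *m Psi x *m y) 0 0.
  exact: (cvg_comp _ _ Pu (@Lcont R k r y (Psi x))).
have h0 : (fun m => (r *m Psi (u m) *m y) 0 0) = cst 0.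
  by apply: funext => m; rewrite /y step_in.
rewrite h0 in hc; have := cvg_lim (@Rhausdorff R) hc.
by rewrite (lim_cst (@Rhausdorff R)) => <-.
Qed.

Lemma Kr_words r : Kr r -> forall w, Kr (r *m psiw Psi w).
Proof.
move=> hr w; elim: w r hr => [|x w IH] r hr /=; first by rewrite mulmx1.
by rewrite mulmxA; apply: IH; exact: step.
Qed.

End Forward.

Lemma int_psi0 : int_psi lam Psi (setT : set (0.-tuple T)) = 1%:M.
Proof.
apply/matrixP => i j; rewrite int_psiE G0E /= indicE in_setT mul1r.
by rewrite erc1.
Qed.

Lemma Kr_one r : Kr r -> r *m (const_mx 1 : 'cV[R]_k) = 0.
Proof. by move=> hr; have := hr 0 setT measurableT; rewrite int_psi0 mulmx1. Qed.


Lemma maxdiff (x : R) : (`|x| + x) / 2 - (`|x| - x) / 2 = x.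
Proof. lra. Qed.

Lemma pp_ge0 (x : R) : 0 <= (`|x| + x) / 2.
Proof. have := ler_norm (- x); rewrite normrN => h; lra. Qed.

Lemma pm_ge0 (x : R) : 0 <= (`|x| - x) / 2.
Proof. have := ler_norm x => h; lra. Qed.

Lemma backward (v : 'rV[R]_k) : orth_span_words Psi v ->
  forall n (E : set (n.-tuple T)), measurable E ->
  v *m int_psi lam Psi E *m (const_mx 1 : 'cV[R]_k) = 0.
Proof.
move=> ho n E mE; have [hf hl _] := allG n.
set one := const_mx 1 : 'cV[R]_k.
pose vp := map_mx (fun x => (`|x| + x) / 2) v.
pose vm := map_mx (fun x => (`|x| - x) / 2) v.
have hvp : nnm vp by move=> i j; rewrite mxE pp_ge0.
have hvm : nnm vm by move=> i j; rewrite mxE pm_ge0.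
have hone : nnm one by move=> i j; rewrite mxE.
have hv : v = vp - vm by apply/matrixP => i j; rewrite !mxE maxdiff.
have key : forall t : n.-tuple T,
    (vp *m psiw Psi t *m one) 0 0 = (vm *m psiw Psi t *m one) 0 0.
  move=> t; have := ho [:: tval t] (psiw Psi t *m one).
  have hin : psiw Psi t *m one \in <<[seq psiw Psi w *m one | w <- [:: tval t]]>>%VS.
    by apply: memv_span; rewrite /= mem_head.
  move/(_ hin); rewrite hv mulmxA mulmxBl mulmxBl => /matrixP/(_ 0 0).
  rewrite [X in X = _]mxE [X in _ = X]mxE [X in _ + X = _]mxE.
  by move=> /eqP; rewrite subr_eq0 => /eqP.
have hG : G n E vp one = G n E vm one.
  by rewrite /G; congr prod_int; apply: funext => t; rewrite key.
have ep : forall a, nnm a ->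
    (a *m int_psi lam Psi E *m one) 0 0 = fine (G n E a one).
  move=> a ha; rewrite (hl _ mE _ _ ha hone) bilin /=.
  by apply: eq_bigr => i _; apply: eq_bigr => j _; rewrite int_psiE.
rewrite hv !mulmxBl; apply/matrixP => i j; rewrite !ord1 [LHS]mxE [RHS]mxE.
rewrite [X in _ + X]mxE (ep _ hvp) (ep _ hvm) hG subrr.
by [].
Qed.

End Main.

Theorem proposition7 (d : measure_display) (T : topMeasurableType d)
  (R : realType) (lam : {measure set T -> \bar R}) (k : nat)
  (Psi : T -> 'M[R]_k) :
  open_pos lam -> is_HMM lam Psi ->
  forall pi1 pi2 : 'rV[R]_k,
    hmm_equiv lam Psi pi1 pi2 <-> orth_span_words Psi (pi1 - pi2).
Proof.
move=> hop [Psi0 mPsi [C [oC [cC hout]]] finPsi _] pi1 pi2; split.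
- move=> heq.
  have Kv : Kr lam Psi (pi1 - pi2).
    by move=> n B mB; rewrite !mulmxBl heq // subrr.
  move=> ws u hu.
  have sub : (<<[seq psiw Psi w *m (const_mx 1 : 'cV[R]_k) | w <- ws]>>
      <= lker (linfun (mulmx (pi1 - pi2))))%VS.
    apply/span_subvP => x /mapP [w _ ->]; rewrite memv_ker lfunE /=; apply/eqP.
    rewrite mulmxA; apply: Kr_one.
    exact: (Kr_words Psi0 mPsi finPsi oC cC hout hop Kv w).
  by have := subvP sub u hu; rewrite memv_ker lfunE /= => /eqP.
- move=> ho n E mE; apply/eqP; rewrite -subr_eq0 -!mulmxBl; apply/eqP.
  exact: (backward Psi0 mPsi finPsi ho mE).
Qed.
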